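(* Let $d\in\mathbb{N}$, $K\in\mathbb{N}$, $K\ge 1$, let $\mathcal{G}$, $n$, $\nabla$, $\triangle_K$ be as in the context, let $f\colon\mathcal{G}\to\mathbb{R}$ be given, and let $\lambda_1,\dots,\lambda_K>0$, $\gamma>0$. Then the functional $$E(u,c,l)=\sum_{k=1}^K\sum_{j\in\mathcal{G}}u_k(j)\,|f(j)-l(j)-c_k|^2+\sum_{k=1}^K\lambda_k\,\big\|\,|\nabla u_k|\,\big\|_1+\gamma\|\nabla l\|_2^2+\iota_{\triangle_K^n}(u),$$ defined for $u=(u_k(j))_{j\in\mathcal{G},\,k=1,\dots,K}\in\mathbb{R}^{nK}$, $c=(c_1,\dots,c_K)\in\mathbb{R}^K$, $l\in\mathbb{R}^{\mathcal{G}}\cong\mathbb{R}^n$, attains its minimum, i.e. there exists $(u^*,c^*,l^* )$ with $E(u^*,c^*,l^* )=\inf_{(u,c,l)}E(u,c,l)<\infty$.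
   Context: $\mathcal{G}=\{1,\dots,n_1\}\times\dots\times\{1,\dots,n_d\}$ is a $d$-dimensional image grid with $n=n_1\cdots n_d$ pixels. For $v\colon\mathcal{G}\to\mathbb{R}$ the discrete gradient $\nabla v\colon\mathcal{G}\to\mathbb{R}^d$ uses forward differences with mirror boundary conditions: $(\nabla v)_i(j)=v(j+e_i)-v(j)$ if $j_i<n_i$ and $(\nabla v)_i(j)=0$ if $j_i=n_i$ ($e_i$ the $i$-th unit vector). $|\nabla v|(j)$ denotes the Euclidean norm of $(\nabla v)(j)\in\mathbb{R}^d$, $\|\cdot\|_1$ is the sum of absolute values over $j\in\mathcal{G}$, and $\|A\|_2$ denotes the square root of the sum of squares of all entries of an array $A$. $u_k=(u_k(j))_{j\in\mathcal{G}}$. $\triangle_K=\{v\in[0,1]^K:\sum_{k=1}^Kv_k=1\}$ is the probability simplex and $u\in\triangle_K^n$ means $(u_k(j))_{k=1}^K\in\triangle_K$ for every $j\in\mathcal{G}$. $\iota_S$ is the indicator function of a set $S$ ($0$ on $S$, $+\infty$ outside). *)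

(* Defs.v *)
From Stdlib Require Import Reals List ClassicalEpsilon.
Import ListNotations.
Open Scope R_scope.

(* Image grid with sizes ns = [n_1; ...; n_d] (d = length ns).
   Pixels are lists j = [j_1; ...; j_d] of 0-based indices, 0 <= j_i < n_i
   (the paper's index j_i corresponds to our j_i + 1). *)
Fixpoint grid (ns : list nat) : list (list nat) :=
  match ns with
  | [] => [[]]
  | m :: ns' => flat_map (fun a => map (cons a) (grid ns')) (seq 0 m)
  end.

Definition lsum {A : Type} (s : list A) (f : A -> R) : R :=
  fold_right (fun x acc => f x + acc) 0 s.

Fixpoint incr_at (i : nat) (j : list nat) : list nat :=
  match j, i with
  | [], _ => []
  | x :: t, O => S x :: t
  | x :: t, S i' => x :: incr_at i' t
  end.

(* forward difference in direction i with mirror boundary conditions *)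
Definition grad_i (ns : list nat) (v : list nat -> R) (i : nat) (j : list nat) : R :=
  if Nat.ltb (S (nth i j 0%nat)) (nth i ns 0%nat) then v (incr_at i j) - v j else 0.

Definition grad_sq (ns : list nat) (v : list nat -> R) (j : list nat) : R :=
  lsum (seq 0 (length ns)) (fun i => (grad_i ns v i j) ^ 2).

Definition TV (ns : list nat) (v : list nat -> R) : R :=
  lsum (grid ns) (fun j => sqrt (grad_sq ns v j)).

Definition grad_norm2_sq (ns : list nat) (v : list nat -> R) : R :=
  lsum (grid ns) (fun j => grad_sq ns v j).

(* u in Delta_K^n; labels k = 0..K-1 *)
Definition in_simplex_field (ns : list nat) (K : nat) (u : nat -> list nat -> R) : Prop :=
  forall j, In j (grid ns) ->
    (forall k, (k < K)%nat -> 0 <= u k j <= 1) /\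
    lsum (seq 0 K) (fun k => u k j) = 1.

Inductive ERbar := Fin (r : R) | PInf.

Definition ER_le (a b : ERbar) : Prop :=
  match a, b with
  | _, PInf => True
  | PInf, Fin _ => False
  | Fin x, Fin y => x <= y
  end.

Definition ER_add (a : ERbar) (b : ERbar) : ERbar :=
  match a, b with
  | Fin x, Fin y => Fin (x + y)
  | _, _ => PInf
  end.

Definition iota (P : Prop) : ERbar :=
  match excluded_middle_informative P with
  | left _ => Fin 0
  | right _ => PInf
  end.

Definition Efun (ns : list nat) (K : nat) (f : list nat -> R)
  (lam : nat -> R) (gamma : R)
  (u : nat -> list nat -> R) (c : nat -> R) (l : list nat -> R) : ERbar :=
  ER_add
    (Fin (lsum (seq 0 K) (fun k => lsum (grid ns) (fun j => u k j * (Rabs (f j - l j - c k)) ^ 2))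
          + lsum (seq 0 K) (fun k => lam k * TV ns (u k))
          + gamma * grad_norm2_sq ns l))
    (iota (in_simplex_field ns K u)).

(* Main.v *)
Require Import Defs.
From Stdlib Require Import Reals List Lra Lia ClassicalEpsilon.
Import ListNotations.
Open Scope R_scope.

Lemma lsum_cons {A} (a : A) s f : lsum (a :: s) f = f a + lsum s f.
Proof. reflexivity. Qed.

Lemma lsum_le {A} (s : list A) f g :
  (forall x, In x s -> f x <= g x) -> lsum s f <= lsum s g.
Proof.
induction s as [|a s IH]; intros H; simpl; [lra|].
apply Rplus_le_compat; [apply H; left; auto | apply IH; intros; apply H; right; auto].
Qed.

Lemma lsum_ext {A} (s : list A) f g :
  (forall x, In x s -> f x = g x) -> lsum s f = lsum s g.
Proof.
induction s as [|a s IH]; intros H; simpl; [lra|].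
rewrite H by (left; auto). rewrite IH; auto. intros; apply H; right; auto.
Qed.

Lemma lsum_nonneg {A} (s : list A) f :
  (forall x, In x s -> 0 <= f x) -> 0 <= lsum s f.
Proof.
intros H. replace 0 with (lsum s (fun _ => 0)).
- apply lsum_le; auto.
- induction s; simpl; auto. rewrite IHs; [lra|]. intros; apply H; right; auto.
Qed.

Lemma lsum_term {A} (s : list A) f y :
  (forall x, In x s -> 0 <= f x) -> In y s -> f y <= lsum s f.
Proof.
induction s as [|a s IH]; intros H Hy; simpl in *; [tauto|].
destruct Hy as [<-|Hy].
- assert (0 <= lsum s f) by (apply lsum_nonneg; auto). lra.
- assert (0 <= f a) by auto. assert (f y <= lsum s f) by auto. lra.
Qed.

Lemma lsum_const {A} (s : list A) a : lsum s (fun _ => a) = INR (length s) * a.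
Proof.
induction s; simpl; [lra|]. rewrite IHs. destruct (length s); simpl; lra.
Qed.

Lemma in_grid_cons m ns a j :
  In (a :: j) (grid (m :: ns)) <-> (a < m)%nat /\ In j (grid ns).
Proof.
simpl. rewrite in_flat_map. split.
- intros [b [Hb Hj]]. apply in_seq in Hb. apply in_map_iff in Hj.
  destruct Hj as [t [Ht Ht']]. inversion Ht; subst. split; [lia|auto].
- intros [Ha Hj]. exists a. split; [apply in_seq; lia|]. apply in_map; auto.
Qed.

Lemma in_grid_inv m ns j : In j (grid (m :: ns)) ->
  exists a j', j = a :: j' /\ (a < m)%nat /\ In j' (grid ns).
Proof.
simpl. rewrite in_flat_map. intros [b [Hb Hj]]. apply in_seq in Hb.
apply in_map_iff in Hj. destruct Hj as [t [<- Ht']]. exists b, t. split; auto. split; auto; lia.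
Qed.

Lemma grid_zero ns j : In j (grid ns) -> In (repeat 0%nat (length ns)) (grid ns).
Proof.
revert j; induction ns as [|m ns IH]; intros j Hj; simpl in *; auto.
destruct (in_grid_inv m ns j Hj) as [a [j' [-> [Ha Hj']]]].
apply in_grid_cons. split; [lia|]. eapply IH; eauto.
Qed.

Lemma grid_sum ns j : In j (grid ns) -> (list_sum j <= list_sum ns)%nat.
Proof.
revert j; induction ns as [|m ns IH]; intros j Hj.
- simpl in Hj. destruct Hj as [<-|[]]. simpl; lia.
- destruct (in_grid_inv m ns j Hj) as [a [j' [-> [Ha Hj']]]].
  simpl. specialize (IH j' Hj'). lia.
Qed.

Lemma path_bound ns (v : list nat -> R) D : 0 <= D ->
  (forall i j, In j (grid ns) -> Rabs (grad_i ns v i j) <= D) ->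
  forall j, In j (grid ns) -> Rabs (v j - v (repeat 0%nat (length ns))) <= INR (list_sum j) * D.
Proof.
revert v; induction ns as [|m ns IH]; intros v HD Hg j Hj.
- simpl in Hj. destruct Hj as [<-|[]]. simpl. rewrite Rminus_diag, Rabs_R0. lra.
- destruct (in_grid_inv m ns j Hj) as [a [j' [-> [Ha Hj']]]].
  simpl (repeat _ _). simpl (list_sum _).
  set (z := repeat 0%nat (length ns)).
  assert (H1 : Rabs (v (a :: j') - v (a :: z)) <= INR (list_sum j') * D).
  { apply (IH (fun t => v (a :: t))); auto.
    intros i t Ht. specialize (Hg (S i) (a :: t)).
    apply Hg. apply in_grid_cons; auto. }
  assert (Hz : In z (grid ns)) by (eapply grid_zero; eauto).
  assert (H2 : forall b, (b <= a)%nat -> Rabs (v (b :: z) - v (0%nat :: z)) <= INR b * D).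
  { induction b as [|b IHb]; intros Hb.
    - rewrite Rminus_diag, Rabs_R0. simpl; lra.
    - specialize (IHb ltac:(lia)).
      assert (Hgb := Hg 0%nat (b :: z) ltac:(apply in_grid_cons; split; [lia|auto])).
      unfold grad_i in Hgb. simpl in Hgb.
      destruct (Nat.ltb (S b) m) eqn:E; [|apply Nat.ltb_ge in E; lia].
      rewrite S_INR.
      replace (v (S b :: z) - v (0%nat :: z)) with ((v (S b :: z) - v (b :: z)) + (v (b :: z) - v (0%nat :: z))) by ring.
      eapply Rle_trans; [apply Rabs_triang|]. lra. }
  specialize (H2 a ltac:(lia)).
  replace (v (a :: j') - v (0%nat :: z)) with ((v (a :: j') - v (a :: z)) + (v (a :: z) - v (0%nat :: z))) by ring.
  eapply Rle_trans; [apply Rabs_triang|]. rewrite plus_INR. lra.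
Qed.

Definition clamp (a b x : R) : R := Rmax a (Rmin b x).

Lemma clamp_id a b x : a <= x <= b -> clamp a b x = x.
Proof. intros. unfold clamp, Rmax, Rmin. repeat destruct Rle_dec; lra. Qed.

Lemma clamp_range a b x : a <= b -> a <= clamp a b x <= b.
Proof. intros. unfold clamp, Rmax, Rmin. repeat destruct Rle_dec; lra. Qed.

Lemma clamp_lip a b x y : a <= b -> Rabs (clamp a b x - clamp a b y) <= Rabs (x - y).
Proof. intros. unfold clamp, Rmax, Rmin. repeat destruct Rle_dec; unfold Rabs; repeat destruct Rcase_abs; lra. Qed.

Lemma clamp_closer a b x z : a <= z <= b -> Rabs (z - clamp a b x) <= Rabs (z - x).
Proof. intros. unfold clamp, Rmax, Rmin. repeat destruct Rle_dec; unfold Rabs; repeat destruct Rcase_abs; lra. Qed.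

Lemma sq_le_abs x y : Rabs x <= Rabs y -> x ^ 2 <= y ^ 2.
Proof.
intros H. rewrite <- (pow2_abs x), <- (pow2_abs y).
assert (0 <= Rabs x) by apply Rabs_pos. nra.
Qed.

Lemma grad_sq_lip ns (w : list nat -> R) (phi : R -> R) j :
  (forall x y, Rabs (phi x - phi y) <= Rabs (x - y)) ->
  grad_sq ns (fun t => phi (w t)) j <= grad_sq ns w j.
Proof.
intros Hphi. unfold grad_sq. apply lsum_le. intros i _.
apply sq_le_abs. unfold grad_i. destruct Nat.ltb; [apply Hphi|lra].
Qed.

Lemma grad_sq_nonneg ns w j : 0 <= grad_sq ns w j.
Proof. unfold grad_sq. apply lsum_nonneg. intros. apply pow2_ge_0. Qed.

Lemma TV_lip ns (w : list nat -> R) (phi : R -> R) :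
  (forall x y, Rabs (phi x - phi y) <= Rabs (x - y)) ->
  TV ns (fun t => phi (w t)) <= TV ns w.
Proof.
intros Hphi. unfold TV. apply lsum_le. intros j _. apply sqrt_le_1_alt.
apply grad_sq_lip; auto.
Qed.

Lemma TV_nonneg ns w : 0 <= TV ns w.
Proof. unfold TV. apply lsum_nonneg. intros. apply sqrt_pos. Qed.

Lemma gn2_lip ns (w : list nat -> R) (phi : R -> R) :
  (forall x y, Rabs (phi x - phi y) <= Rabs (x - y)) ->
  grad_norm2_sq ns (fun t => phi (w t)) <= grad_norm2_sq ns w.
Proof.
intros Hphi. unfold grad_norm2_sq. apply lsum_le. intros j _. apply grad_sq_lip; auto.
Qed.

Lemma gn2_nonneg ns w : 0 <= grad_norm2_sq ns w.
Proof. unfold grad_norm2_sq. apply lsum_nonneg. intros. apply grad_sq_nonneg. Qed.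

Lemma grad_i_bound ns w i j : In j (grid ns) ->
  Rabs (grad_i ns w i j) <= sqrt (grad_norm2_sq ns w).
Proof.
intros Hj.
assert (Hsq : (grad_i ns w i j) ^ 2 <= grad_norm2_sq ns w).
{ eapply Rle_trans with (grad_sq ns w j).
  - destruct (Nat.lt_ge_cases i (length ns)) as [Hi|Hi].
    + unfold grad_sq. apply (lsum_term _ (fun i => grad_i ns w i j ^ 2)).
      * intros; apply pow2_ge_0.
      * apply in_seq; lia.
    + unfold grad_i. rewrite (nth_overflow ns) by lia.
      destruct (Nat.ltb _ 0) eqn:E; [apply Nat.ltb_lt in E; lia|].
      replace (0 ^ 2) with 0 by ring. apply grad_sq_nonneg.
  - unfold grad_norm2_sq. apply (lsum_term _ (fun j => grad_sq ns w j)); auto.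
    intros; apply grad_sq_nonneg. }
rewrite <- sqrt_Rsqr_abs. apply sqrt_le_1_alt. unfold Rsqr. simpl in Hsq. lra.
Qed.

Definition Ef (ns : list nat) (K : nat) (f : list nat -> R)
  (lam : nat -> R) (gamma : R)
  (u : nat -> list nat -> R) (c : nat -> R) (l : list nat -> R) : R :=
  lsum (seq 0 K) (fun k => lsum (grid ns) (fun j => u k j * (Rabs (f j - l j - c k)) ^ 2))
          + lsum (seq 0 K) (fun k => lam k * TV ns (u k))
          + gamma * grad_norm2_sq ns l.

Lemma Efun_eq ns K f lam gamma u c l :
  Efun ns K f lam gamma u c l = ER_add (Fin (Ef ns K f lam gamma u c l)) (iota (in_simplex_field ns K u)).
Proof. reflexivity. Qed.

Lemma iota_true (P : Prop) : P -> iota P = Fin 0.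
Proof. intros H. unfold iota. destruct excluded_middle_informative; tauto. Qed.

Lemma iota_false (P : Prop) : ~ P -> iota P = PInf.
Proof. intros H. unfold iota. destruct excluded_middle_informative; tauto. Qed.

Lemma abs_bounds x a : Rabs x <= a -> - a <= x <= a.
Proof. unfold Rabs; destruct Rcase_abs; lra. Qed.

Lemma data_nonneg ns K f u c l : in_simplex_field ns K u ->
  0 <= lsum (seq 0 K) (fun k => lsum (grid ns) (fun j => u k j * (Rabs (f j - l j - c k)) ^ 2)).
Proof.
intros Hs. apply lsum_nonneg. intros k Hk. apply in_seq in Hk.
apply lsum_nonneg. intros j Hj. destruct (Hs j Hj) as [H1 _].
specialize (H1 k ltac:(lia)). apply Rmult_le_pos; [lra|apply pow2_ge_0].
Qed.

Lemma tv_nonneg ns K lam u : (forall k, (k < K)%nat -> 0 < lam k) ->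
  0 <= lsum (seq 0 K) (fun k => lam k * TV ns (u k)).
Proof.
intros Hl. apply lsum_nonneg. intros k Hk. apply in_seq in Hk.
apply Rmult_le_pos; [specialize (Hl k ltac:(lia)); lra|apply TV_nonneg].
Qed.

Lemma Ef_nonneg ns K f lam gamma u c l :
  (forall k, (k < K)%nat -> 0 < lam k) -> 0 < gamma -> in_simplex_field ns K u ->
  0 <= Ef ns K f lam gamma u c l.
Proof.
intros Hl Hg Hs. unfold Ef.
pose proof (data_nonneg ns K f u c l Hs). pose proof (tv_nonneg ns K lam u Hl).
pose proof (gn2_nonneg ns l). nra.
Qed.

Lemma reduce ns K f lam gamma u c l E0 :
  (forall k, (k < K)%nat -> 0 < lam k) -> 0 < gamma -> in_simplex_field ns K u ->
  Ef ns K f lam gamma u c l <= E0 ->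
  let L := INR (list_sum ns) * sqrt (E0 / gamma) in
  let C := lsum (grid ns) (fun j => Rabs (f j)) + L in
  let l0 := l (repeat 0%nat (length ns)) in
  Ef ns K f lam gamma (fun k j => clamp 0 1 (u k j)) (fun k => clamp (-C) C (c k + l0))
     (fun j => clamp (-L) L (l j - l0)) <= Ef ns K f lam gamma u c l.
Proof.
intros Hl Hg Hs HE L C l0.
pose proof (data_nonneg ns K f u c l Hs) as Hd. pose proof (tv_nonneg ns K lam u Hl) as Ht.
set (N2 := grad_norm2_sq ns l).
assert (HN : N2 <= E0 / gamma).
{ unfold Ef in HE. fold N2 in HE. apply Rmult_le_reg_l with gamma; auto.
  field_simplify; lra. }
assert (HN0 : 0 <= N2) by apply gn2_nonneg.
assert (Hsq : sqrt N2 <= sqrt (E0 / gamma)) by (apply sqrt_le_1_alt; auto).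
assert (HL0 : 0 <= L).
{ unfold L. apply Rmult_le_pos; [apply pos_INR|apply sqrt_pos]. }
assert (Hlj : forall j, In j (grid ns) -> Rabs (l j - l0) <= L).
{ intros j Hj. unfold l0. eapply Rle_trans.
  - apply (path_bound ns l (sqrt N2)); auto. apply sqrt_pos.
    intros i t Htt. apply grad_i_bound; auto.
  - unfold L. apply Rmult_le_compat; [apply pos_INR|apply sqrt_pos| |auto].
    apply le_INR. apply grid_sum; auto. }
assert (HM : forall j, In j (grid ns) -> Rabs (f j) <= lsum (grid ns) (fun j => Rabs (f j))).
{ intros j Hj. apply (lsum_term _ (fun j => Rabs (f j))); auto. intros; apply Rabs_pos. }
assert (HC0 : 0 <= C).
{ unfold C. pose proof (lsum_nonneg (grid ns) (fun j => Rabs (f j)) (fun x _ => Rabs_pos (f x))). lra. }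
unfold Ef. apply Rplus_le_compat; [apply Rplus_le_compat|].
- apply lsum_le. intros k Hk. apply in_seq in Hk. apply lsum_le. intros j Hj.
  destruct (Hs j Hj) as [Hu _]. specialize (Hu k ltac:(lia)).
  rewrite (clamp_id 0 1 (u k j)) by lra.
  apply Rmult_le_compat_l; [lra|]. apply sq_le_abs. rewrite !Rabs_Rabsolu.
  specialize (Hlj j Hj). specialize (HM j Hj).
  rewrite (clamp_id (-L) L) by (apply abs_bounds; auto).
  replace (f j - (l j - l0) - clamp (- C) C (c k + l0)) with ((f j - l j + l0) - clamp (- C) C (c k + l0)) by ring.
  replace (f j - l j - c k) with ((f j - l j + l0) - (c k + l0)) by ring.
  apply clamp_closer. apply abs_bounds.
  replace (f j - l j + l0) with (f j - (l j - l0)) by ring.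
  eapply Rle_trans; [apply Rabs_triang|]. rewrite Rabs_Ropp. unfold C. lra.
- apply lsum_le. intros k Hk. apply in_seq in Hk.
  apply Rmult_le_compat_l; [specialize (Hl k ltac:(lia)); lra|].
  apply (TV_lip ns (u k) (clamp 0 1)). intros; apply clamp_lip; lra.
- apply Rmult_le_compat_l; [lra|].
  apply (gn2_lip ns l (fun x => clamp (-L) L (x - l0))).
  intros x y. eapply Rle_trans; [apply clamp_lip; lra|].
  replace (x - l0 - (y - l0)) with (x - y) by ring. lra.
Qed.

From HB Require Import structures.
From mathcomp Require Import all_boot all_order all_algebra.
From mathcomp Require Import all_classical all_reals all_analysis.
From mathcomp Require Import Rstruct Rstruct_topology.
Import Order.TTheory GRing.Theory Num.Theory.
Import ArrowAsProduct.
Local Open Scope classical_set_scope.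
Section Cont.
Variable T : topologicalType.

Lemma ct_cst (a : R) : continuous (fun _ : T => a).
Proof. move=> x; exact: cst_continuous. Qed.

Lemma ct_add (f g : T -> R) : continuous f -> continuous g -> continuous (fun x => Rplus (f x) (g x)).
Proof. move=> cf cg x; have h := @continuousD R R^o T f g x (cf x) (cg x); exact: h. Qed.

Lemma ct_mul (f g : T -> R) : continuous f -> continuous g -> continuous (fun x => Rmult (f x) (g x)).
Proof. move=> cf cg x; have h := @continuousM R T f g x (cf x) (cg x); exact: h. Qed.

Lemma ct_opp (f : T -> R) : continuous f -> continuous (fun x => Ropp (f x)).
Proof. move=> cf x; have h := @continuousN R R^o T f x (cf x); exact: h. Qed.

Lemma ct_sqrt (f : T -> R) : continuous f -> continuous (fun x => sqrt (f x)).
Proof.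
move=> cf x.
have -> : (fun x => sqrt (f x)) = (fun x => Num.sqrt (f x)).
  by apply: funext => y; rewrite RsqrtE.
apply: continuous_comp; first exact: cf.
exact: sqrt_continuous.
Qed.

Lemma ct_abs (f : T -> R) : continuous f -> continuous (fun x => Rabs (f x)).
Proof.
move=> cf x; apply: continuous_comp; first exact: cf.
exact: (@norm_continuous _ R^o).
Qed.
End Cont.

Lemma ct_proj (I : eqType) (i : I) : continuous (fun p : I -> R => p i).
Proof. exact: (@proj_continuous I (fun _ => R) i). Qed.

Lemma min_on_box (I : eqType) (lo hi : I -> R) (P : set (I -> R)) (G : (I -> R) -> R) :
  closed P -> continuous G ->
  (exists p0, P p0 /\ forall i, Rle (lo i) (p0 i) /\ Rle (p0 i) (hi i)) ->
  exists p, (P p /\ forall i, Rle (lo i) (p i) /\ Rle (p i) (hi i)) /\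
    forall q, P q -> (forall i, Rle (lo i) (q i) /\ Rle (q i) (hi i)) -> Rle (G p) (G q).
Proof.
move=> cP cG [p0 [Pp0 Bp0]].
pose B := [set f : I -> R | forall i, `[lo i, hi i]%classic (f i)].
have cB : compact B.
  have h := (@tychonoff I (fun _ => R) (fun i => `[lo i, hi i]%classic) (fun i => @segment_compact R (lo i) (hi i))).
  exact h.
have inB q : B q <-> (forall i, Rle (lo i) (q i) /\ Rle (q i) (hi i)).
  rewrite /B /=; split => h i; have := h i.
    by rewrite /= in_itv /= => /andP[/RleP a /RleP b].
  by case=> /RleP a /RleP b; rewrite /= in_itv /= a b.
have cA : compact (B `&` P) by apply: compact_closedI.
have nA : (B `&` P) !=set0 by exists p0; split => //; apply/inB.
have [c cA' minc] := compact_EVT_min nA cA (@continuous_subspaceT _ _ (B `&` P) G cG).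
move: cA'; rewrite inE => -[Bc Pc].
exists c; split; first by split => //; apply/inB.
move=> q Pq Bq; apply/RleP; apply: minc; rewrite inE; split => //; exact/inB.
Qed.

Lemma closed_eqs (T : topologicalType) (J : Type) (D : set J) (h : J -> T -> R) (a : R) :
  (forall j, continuous (h j)) -> closed [set p | forall j, D j -> h j p = a].
Proof.
move=> ch.
have -> : [set p | forall j, D j -> h j p = a] = \bigcap_(j in D) (h j @^-1` [set x | x = a]).
  by apply/seteqP; split => p /= H j Dj; apply: H.
apply: closed_bigI => j _; apply: preimage_closed.
  by move=> x _; apply: ch.
exact: (@closed_eq R a).
Qed.

Section ContG.
Variable T : topologicalType.

Lemma ct_lsum (A : Type) (s : list A) (F : A -> T -> R) :
  (forall a, continuous (F a)) -> continuous (fun p => lsum s (fun a => F a p)).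
Proof.
move=> cF; elim: s => [|a s IH] /=; first exact: ct_cst.
exact: ct_add.
Qed.

Lemma ct_pow (g : T -> R) (n : nat) : continuous g -> continuous (fun p => pow (g p) n).
Proof.
move=> cg; elim: n => [|n IH] /=; first exact: ct_cst.
exact: ct_mul.
Qed.

Lemma ct_minus (f g : T -> R) : continuous f -> continuous g -> continuous (fun x => Rminus (f x) (g x)).
Proof. by move=> cf cg; apply: ct_add => //; apply: ct_opp. Qed.

Lemma ct_grad_i ns (w : T -> list nat -> R) i j :
  (forall t, continuous (fun p => w p t)) -> continuous (fun p => grad_i ns (w p) i j).
Proof.
move=> cw; rewrite /grad_i; case: (Nat.ltb _ _); last exact: ct_cst.
exact: ct_minus.
Qed.

Lemma ct_grad_sq ns (w : T -> list nat -> R) j :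
  (forall t, continuous (fun p => w p t)) -> continuous (fun p => grad_sq ns (w p) j).
Proof.
move=> cw; rewrite /grad_sq; apply: (@ct_lsum _ _ (fun i p => pow (grad_i ns (w p) i j) 2)) => i.
by apply: ct_pow; apply: ct_grad_i.
Qed.

Lemma ct_TV ns (w : T -> list nat -> R) :
  (forall t, continuous (fun p => w p t)) -> continuous (fun p => TV ns (w p)).
Proof.
move=> cw; rewrite /TV; apply: (@ct_lsum _ _ (fun j p => sqrt (grad_sq ns (w p) j))) => j.
by apply: ct_sqrt; apply: ct_grad_sq.
Qed.

Lemma ct_gn2 ns (w : T -> list nat -> R) :
  (forall t, continuous (fun p => w p t)) -> continuous (fun p => grad_norm2_sq ns (w p)).
Proof.
move=> cw; rewrite /grad_norm2_sq; apply: (@ct_lsum _ _ (fun j p => grad_sq ns (w p) j)) => j.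
exact: ct_grad_sq.
Qed.

Lemma ct_Ef ns K f lam gamma (u : T -> nat -> list nat -> R) (c : T -> nat -> R) (l : T -> list nat -> R) :
  (forall k t, continuous (fun p => u p k t)) -> (forall k, continuous (fun p => c p k)) ->
  (forall t, continuous (fun p => l p t)) ->
  continuous (fun p => Ef ns K f lam gamma (u p) (c p) (l p)).
Proof.
move=> cu cc cl; rewrite /Ef.
apply: ct_add; first apply: ct_add.
- apply: (@ct_lsum _ _ (fun k p => lsum (grid ns) (fun j => u p k j * (Rabs (f j - l p j - c p k)) ^ 2))) => k.
  apply: (@ct_lsum _ _ (fun j p => u p k j * (Rabs (f j - l p j - c p k)) ^ 2)) => j.
  apply: ct_mul => //; apply: ct_pow; apply: ct_abs; apply: ct_minus; last exact: cc.
  by apply: ct_minus => //; apply: ct_cst.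
- apply: (@ct_lsum _ _ (fun k p => lam k * TV ns (u p k))) => k.
  by apply: ct_mul; [apply: ct_cst|apply: ct_TV].
- by apply: ct_mul; [apply: ct_cst|apply: ct_gn2].
Qed.
End ContG.

Local Open Scope R_scope.

Theorem mainTheorem1 (ns : list nat) (K : nat) (HK : (1 <= K)%coq_nat)
  (f : list nat -> R) (lam : nat -> R) (gamma : R)
  (Hlam : forall k, (k < K)%coq_nat -> 0 < lam k) (Hgamma : 0 < gamma) :
  exists (us : nat -> list nat -> R) (cs : nat -> R) (ls : list nat -> R),
    Efun ns K f lam gamma us cs ls <> PInf /\
    forall (u : nat -> list nat -> R) (c : nat -> R) (l : list nat -> R),
      ER_le (Efun ns K f lam gamma us cs ls) (Efun ns K f lam gamma u c l).
Proof.
pose Idx := (((nat * list nat) + nat) + list nat)%type.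
pose dU (p : Idx -> R) := fun k j => p (inl (inl (k, j))).
pose dC (p : Idx -> R) := fun k => p (inl (inr k)).
pose dL (p : Idx -> R) := fun j => p (inr j).
pose G (p : Idx -> R) := Ef ns K f lam gamma (dU p) (dC p) (dL p).
pose p0 : Idx -> R := fun i => match i with inl (inl _) => / INR K | _ => 0 end.
have HK0 : 0 < INR K by apply lt_0_INR; lia.
have HK1 : / INR K <= 1.
  rewrite -Rinv_1; apply Rinv_le_contravar; first lra.
  by apply (le_INR 1); lia.
have simp0 : in_simplex_field ns K (dU p0).
  move=> j Hj; split.
    move=> k Hk; rewrite /dU /p0 /=; split => //.
    by apply: Rlt_le; apply: Rinv_0_lt_compat.
  rewrite /dU /p0 /= lsum_const length_seq; field; lra.
pose E0 := G p0.
have HE0 : 0 <= E0 by apply: Ef_nonneg.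
pose L := INR (list_sum ns) * sqrt (E0 / gamma).
pose C := lsum (grid ns) (fun j => Rabs (f j)) + L.
have HL0 : 0 <= L by apply: Rmult_le_pos; [apply: pos_INR|apply: sqrt_pos].
have HC0 : 0 <= C.
  have := lsum_nonneg (grid ns) (fun j => Rabs (f j)) (fun x _ => Rabs_pos (f x)).
  rewrite /C; lra.
pose lo : Idx -> R := fun i => match i with inl (inl _) => 0 | inl (inr _) => -C | inr _ => -L end.
pose hi : Idx -> R := fun i => match i with inl (inl _) => 1 | inl (inr _) => C | inr _ => L end.
pose P : set (Idx -> R) := [set p | forall j, In j (grid ns) -> lsum (List.seq 0 K) (fun k => dU p k j) = 1].
have cP : closed P.
  apply: (@closed_eqs _ _ _ (fun j p => lsum (List.seq 0 K) (fun k => dU p k j))) => j.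
  apply: (@ct_lsum _ _ _ (fun k p => dU p k j)) => k.
  exact: ct_proj.
have cG : continuous G.
  apply: ct_Ef => *; exact: ct_proj.
have [p [[Pp Bp] minp]] : exists p : Idx -> R, (P p /\ forall i, Rle (lo i) (p i) /\ Rle (p i) (hi i)) /\
    forall q, P q -> (forall i, Rle (lo i) (q i) /\ Rle (q i) (hi i)) -> Rle (G p) (G q).
  apply: min_on_box => //.
  exists p0; split; first by move=> j Hj; case: (simp0 j Hj).
  case=> [[[k j]|k]|j] /=; split; try lra.
  by apply: Rlt_le; apply: Rinv_0_lt_compat.
have simpp : in_simplex_field ns K (dU p).
  move=> j Hj; split; last exact: Pp.
  by move=> k _; apply: (Bp (inl (inl (k, j)))).
exists (dU p), (dC p), (dL p).
rewrite Efun_eq (iota_true _ simpp); split; first by [].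
move=> u c l; rewrite Efun_eq.
case: (Classical_Prop.classic (in_simplex_field ns K u)) => Hs; last by rewrite iota_false.
rewrite (iota_true _ Hs) /=.
have GpE0 : G p <= E0.
  apply: minp; first by move=> j Hj; case: (simp0 j Hj).
  case=> [[[k j]|k]|j] /=; split; try lra.
  by apply: Rlt_le; apply: Rinv_0_lt_compat.
change (G p + 0 <= Ef ns K f lam gamma u c l + 0).
case: (Rle_lt_dec (Ef ns K f lam gamma u c l) E0) => HE; last lra.
have Hred := reduce ns K f lam gamma u c l E0 Hlam Hgamma Hs HE.
simpl in Hred.
pose l0 := l (repeat 0%nat (length ns)).
pose q : Idx -> R := fun i => match i with
  | inl (inl (k, j)) => clamp 0 1 (u k j)
  | inl (inr k) => clamp (-C) C (c k + l0)
  | inr j => clamp (-L) L (l j - l0) end.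
have Gq : G q <= Ef ns K f lam gamma u c l by exact: Hred.
have : G p <= G q.
  apply: minp.
    move=> j Hj; rewrite /dU /q /=.
    case: (Hs j Hj) => Hu Hsum; rewrite -[RHS]Hsum; apply: lsum_ext => k Hk.
    apply: clamp_id; apply: Hu; apply in_seq in Hk; lia.
  case=> [[[k j]|k]|j] /=; apply: clamp_range; lra.
lra.
Qed.
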